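(* Let $(\mathbb{X},\mathcal{X},\mu,T)$ be a non-atomic probability space with $T$ invertible, measure-preserving and ergodic, and let $(l(n))_{n\ge1}$ be an increasing sequence of positive integers. Then there exists a measurable function $v:\mathbb{X}\to[0,\infty)$ (finite a.e.) such that $\limsup_n \frac{1}{l(n)}\,v\circ T^n=+\infty$ $\mu$-a.e. *)

(* Defs.v *)
From HB Require Import structures.
From mathcomp Require Import all_boot all_order all_algebra.
From mathcomp Require Import all_classical all_reals all_analysis.
Set Implicit Arguments. Unset Strict Implicit. Unset Printing Implicit Defensive.
Import Order.TTheory GRing.Theory Num.Theory.
Local Open Scope classical_set_scope.
Local Open Scope ring_scope.

Definition non_atomic d (X : measurableType d) (R : realType)
  (mu : set X -> \bar R) : Prop :=
  forall A, measurable A -> (0 < mu A)%E ->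
    exists B, [/\ measurable B, B `<=` A & (0 < mu B < mu A)%E].

Definition invertible_mt d (X : measurableType d) (T : X -> X) : Prop :=
  measurable_fun setT T /\
  exists Tinv : X -> X,
    [/\ measurable_fun setT Tinv, cancel T Tinv & cancel Tinv T].

Definition measure_preserving d (X : measurableType d) (R : realType)
  (mu : set X -> \bar R) (T : X -> X) : Prop :=
  measurable_fun setT T /\
  forall A, measurable A -> mu (T @^-1` A) = mu A.

Definition ergodic d (X : measurableType d) (R : realType)
  (mu : set X -> \bar R) (T : X -> X) : Prop :=
  forall A, measurable A -> T @^-1` A = A -> mu A = 0%E \/ mu A = 1%E.

(* Main.v *)
Require Import Defs.
From HB Require Import structures.
From mathcomp Require Import all_boot all_order all_algebra.
From mathcomp Require Import all_classical all_reals all_analysis.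
From mathcomp Require Import lra.
Import Order.TTheory GRing.Theory Num.Theory.
Import numFieldNormedType.Exports.
Local Open Scope classical_set_scope.
Local Open Scope ring_scope.

Lemma iter_mfun {d} {X : measurableType d} {T : X -> X} :
  measurable_fun setT T -> forall n, measurable_fun setT (iter n T).
Proof.
move=> mT; elim=> [|n IH] /=; first exact: measurable_id.
exact: (measurableT_comp mT IH).
Qed.

Lemma iter_preim {d} {X : measurableType d} {T : X -> X} {A} n :
  measurable_fun setT T -> measurable A -> measurable (iter n T @^-1` A).
Proof.
move=> mT mA; rewrite -[_ @^-1` _]setTI; have := iter_mfun mT n; move=> /(_ measurableT A mA). done.
Qed.

Lemma iter_mp {d} {X : measurableType d} {R : realType} {mu : probability X R} {T} :
  measure_preserving mu T -> forall n A, measurable A -> mu (iter n T @^-1` A) = mu A.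
Proof.
move=> [mT pT]; elim=> [|n IH] A mA //=.
have -> : iter n.+1 T @^-1` A = iter n T @^-1` (T @^-1` A) by [].
rewrite IH ?pT //; rewrite -[_ @^-1` _]setTI; exact: mT.
Qed.

Definition Fv {X : Type} (T : X -> X) (A : set X) (m : nat) : set X :=
  \bigcup_(n in [set n | (m <= n)%N]) iter n T @^-1` A.

Lemma Fv_meas {d} {X : measurableType d} {T : X -> X} {A} m :
  measurable_fun setT T -> measurable A -> measurable (Fv T A m).
Proof.
move=> mT mA; apply: bigcup_measurable => n _; exact: iter_preim.
Qed.

Lemma Fv_S {X : Type} (T : X -> X) A m : T @^-1` Fv T A m = Fv T A m.+1.
Proof.
apply/seteqP; split => x /=.
  move=> [n /= mn hn]; exists n.+1 => //; rewrite /preimage /= -iterS iterSr. exact: hn.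
move=> [[|n] //= mn hn]; exists n => //=. rewrite /preimage /= -iterSr iterS. exact: hn.
Qed.

Lemma Fv_dec {X : Type} (T : X -> X) A m : Fv T A m.+1 `<=` Fv T A m.
Proof. by move=> x [n /= mn hn]; exists n => //=; apply: ltnW. Qed.

Lemma visit {d} {X : measurableType d} {R : realType} (mu : probability X R) T A :
  measure_preserving mu T -> ergodic mu T -> measurable A -> (0 < mu A)%E ->
  forall m, mu (Fv T A m) = 1%E.
Proof.
move=> [mT pT] erg mA A0.
have mF m : measurable (Fv T A m) by exact: Fv_meas.
have Fc m : mu (Fv T A m) = mu (Fv T A 0).
  elim: m => // m IH; rewrite -Fv_S pT //.
have mE : measurable (\bigcap_m Fv T A m) by apply: bigcap_measurable.
have EI : T @^-1` (\bigcap_m Fv T A m) = \bigcap_m Fv T A m.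
  rewrite preimage_bigcap; apply/seteqP; split => x /= h m _.
    case: m => [|m]; first by apply: Fv_dec; rewrite -Fv_S; exact: h.
    by rewrite -Fv_S; exact: h.
  by rewrite Fv_S; exact: h.
have hc := @nonincreasing_cvg_mu _ _ _ mu (Fv T A) _ mF mE _.
have mEF : mu (\bigcap_m Fv T A m) = mu (Fv T A 0).
  have h : (mu \o Fv T A) @ \oo --> mu (\bigcap_m Fv T A m).
    apply: hc; last by move=> a b ab; apply/subsetPset => x [n /= an hn]; exists n => //=; apply: leq_trans ab an.
    by rewrite (le_lt_trans (probability_le1 _ _)) ?ltry.
  move: h; rewrite (_ : mu \o Fv T A = cst (mu (Fv T A 0))); last by apply: funext => m /=; exact: Fc.
  by move=> /cvg_lim => <- //; rewrite lim_cst.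
have F0 : (0 < mu (Fv T A 0))%E.
  apply: (lt_le_trans A0); apply: le_measure; rewrite ?inE //.
  by move=> x Ax; exists 0%N.
move=> m; rewrite Fc -mEF.
case: (erg _ mE EI) => // h; move: F0; rewrite -mEF h ltxx //.
Qed.

Definition Vf {X : Type} (T : X -> X) (A : set X) (m N : nat) : set X :=
  \bigcup_(n in [set n | (m <= n < N)%N]) iter n T @^-1` A.

Lemma horizon {d} {X : measurableType d} {R : realType} (mu : probability X R) T A :
  measure_preserving mu T -> ergodic mu T -> measurable A -> (0 < mu A)%E ->
  forall m (e : R), 0 < e -> exists N, (1 - e%:E < mu (Vf T A m N))%E.
Proof.
move=> mp erg mA A0 m e e0.
have mT := mp.1.
have mV N : measurable (Vf T A m N).
  by apply: bigcup_measurable => n _; exact: iter_preim.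
have UV : \bigcup_N Vf T A m N = Fv T A m.
  apply/seteqP; split => x.
    by move=> [N _ [n /= /andP[mn _] hn]]; exists n.
  by move=> [n /= mn hn]; exists n.+1 => //; exists n => //=; rewrite mn ltnSn.
have ndV : nondecreasing_seq (Vf T A m).
  move=> a b ab; apply/subsetPset => x [n /= /andP[mn na] hn]; exists n => //=.
  by rewrite mn (leq_trans na ab).
have h1 : (mu \o Vf T A m) @ \oo --> 1%E.
  rewrite -(visit mu T A mp erg mA A0 m) -UV.
  by apply: nondecreasing_cvg_mu => //; rewrite UV; exact: Fv_meas.
have ndmu : nondecreasing_seq (mu \o Vf T A m).
  by move=> a b ab; apply: le_measure; rewrite ?inE //; apply/subsetPset/ndV.
have h2 := ereal_nondecreasing_cvgn ndmu.
have E1 : ereal_sup (range (mu \o Vf T A m)) = 1%E.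
  by apply: (cvg_unique _ h2 h1).
have : (1 - e%:E < ereal_sup (range (mu \o Vf T A m)))%E.
  by rewrite E1 -EFinB lte_fin ltrBlDr ltrDl.
by move=> /ereal_sup_gt [_ [N _ <-] hN]; exists N.
Qed.

Lemma disj_sets {d} {X : measurableType d} {R : realType} (mu : probability X R) :
  non_atomic mu -> exists A : nat -> set X,
    (forall k, measurable (A k) /\ (0 < mu (A k))%E) /\
    (forall j k x, A j x -> A k x -> j = k).
Proof.
move=> na.
have H : forall S : set X, exists B, measurable S -> (0 < mu S)%E ->
    [/\ measurable B, B `<=` S & (0 < mu B < mu S)%E].
  move=> S; have [[mS S0]|nS] := pselect (measurable S /\ (0 < mu S)%E).
    by have [B hB] := na S mS S0; exists B.
  by exists set0 => mS S0; exfalso; apply: nS.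
have [f hf] := choice H.
pose C k := iter k (fun S => S `\` f S) setT.
have PC k : measurable (C k) /\ (0 < mu (C k))%E.
  elim: k => [|k [mC C0]] /=; first by rewrite probability_setT.
  have [mf fC /andP[f0 fl]] := hf _ mC C0.
  split; first exact: measurableD.
  rewrite measureD // ?(le_lt_trans (probability_le1 _ _)) ?ltry //.
  by rewrite setIidr // sube_gt0.
have Cdec j k : (j <= k)%N -> C k `<=` C j.
  move=> /subnK <-; elim: (k - j)%N => [|i IH] //= x.
  by move=> [/IH].
exists (fun k => f (C k)); split.
  by move=> k; have [mC C0] := PC k; have [? ? /andP[]] := hf _ mC C0.
have sub k : f (C k) `<=` C k by have [mC C0] := PC k; have [] := hf _ mC C0.
have key j k x : (j < k)%N -> f (C j) x -> f (C k) x -> False.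
  move=> jk xj /sub /(Cdec _ _ jk) /= [_]; exact.
move=> j k x xj xk; case: (ltngtP j k) => // jk.
  by case: (key _ _ _ jk xj xk).
by case: (key _ _ _ jk xk xj).
Qed.

Lemma esup_big {R : realType} (u : nat -> \bar R) :
  (forall (M : R) m, exists n, (m <= n)%N /\ (M%:E <= u n)%E) ->
  limn_esup u = +oo%E.
Proof.
move=> H; rewrite limn_esup_lim.
have -> : esups u = cst +oo%E.
  apply: funext => n /=; change (ereal_sup (sdrop u n) = +oo%E).
  have hs : forall M : R, (M%:E <= ereal_sup (sdrop u n))%E.
    move=> M; have [k [nk Mk]] := H M n.
    by apply: (le_trans Mk); apply: ereal_sup_ubound; exists k.
  move: hs; case: (ereal_sup (sdrop u n)) => // [r|] hs.
    by have := hs (r + 1); rewrite lee_fin => h; exfalso; lra.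
  by have := hs 0.
by apply: lim_cst.
Qed.

Theorem lemma3 (d : measure_display) (X : measurableType d) (R : realType)
  (mu : probability X R) (T : X -> X) (l : nat -> nat) :
  non_atomic mu -> invertible_mt T -> measure_preserving mu T -> ergodic mu T ->
  (forall n, (0 < n)%N -> (0 < l n)%N) ->
  (forall m n, (0 < m)%N -> (m < n)%N -> (l m < l n)%N) ->
  exists v : X -> R,
    [/\ measurable_fun setT v, (forall x, 0 <= v x) &
      {ae mu, forall x,
        limn_esup (fun n => ((v (iter n T x)) / (l n)%:R)%:E) = +oo%E}].
Proof.
move=> na inv mp erg lpos lmono.
have mT := mp.1.
have [A [PA disA]] := disj_sets mu na.
have H k : exists N, (1 - ((k.+1)%:R^-1)%:E < mu (Vf T (A k) k.+1 N))%E.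
  have [mA A0] := PA k.
  by apply: (horizon mu T (A k) mp erg mA A0); rewrite invr_gt0 ltr0n.
have [N hN] := choice H.
pose c k : R := (k.+1)%:R * (l (N k))%:R.
have c0 k : 0 <= c k by rewrite mulr_ge0 ?ler0n.
pose h n x : R := \sum_(k < n) c k * \1_(A k) x.
have hA k x : A k x -> forall n, (k < n)%N -> h n x = c k.
  move=> Akx n kn; rewrite /h (bigD1 (Ordinal kn)) //= big1 ?addr0.
    by rewrite indicE mem_set // mulr1.
  move=> j /eqP jk; rewrite indicE memNset ?mulr0 //.
  move=> Ajx; apply: jk; apply: val_inj => /=; exact: disA Ajx Akx.
have hN0 x : (forall k, ~ A k x) -> forall n, h n x = 0.
  move=> nA n; rewrite /h big1 // => j _; by rewrite indicE memNset ?mulr0.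
have hcv x : exists2 a : R, h ^~ x @ \oo --> a & (forall k, A k x -> a = c k) /\ 0 <= a.
  have [[k Akx]|nA] := pselect (exists k, A k x).
    exists (c k); last by split => // j Ajx; rewrite (disA _ _ _ Ajx Akx).
    by apply: cvg_near_cst; exists k.+1 => // n /= kn; exact: hA.
  exists 0; last by split => // k Akx; exfalso; apply: nA; exists k.
  apply: cvg_near_cst; apply: nearW => n; apply: hN0 => k Akx; apply: nA; by exists k.
pose v x := limn (h ^~ x).
have vE : forall y a, h ^~ y @ \oo --> a -> v y = a.
  by move=> y a ha; apply: cvg_lim.
exists v; split.
- apply: (measurable_realfun.measurable_fun_cvg (h := h)).
    move=> n; apply: measurable_sum => k; apply: measurable_realfun.measurable_funM => //.
    exact: measurable_realfun.measurable_indic (PA k).1.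
  by move=> x _; have [a ha _] := hcv x; rewrite (vE x a ha).
- by move=> x; have [a ha [_ a0]] := hcv x; rewrite (vE x a ha).
pose G k := Vf T (A k) k.+1 (N k).
have mG k : measurable (G k).
  by apply: bigcup_measurable => n _; apply: iter_preim => //; exact: (PA k).1.
have muGc k : (mu (~` G k) < ((k.+1)%:R^-1)%:E)%E.
  rewrite probability_setC //; have := hN k.
  have gf : mu (G k) \is a fin_num.
    by rewrite ge0_fin_numE // (le_lt_trans (probability_le1 _ _)) ?ltry.
  rewrite -/(G k) -(fineK gf) -!EFinB !lte_fin ; by rewrite !ltrBlDr addrC.
pose Bad := \bigcup_m \bigcap_(k in [set k | (m <= k)%N]) ~` G k.
have null m : mu (\bigcap_(k in [set k | (m <= k)%N]) ~` G k) = 0%E.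
  apply/eqP; rewrite eq_le measure_ge0 andbT.
  apply/lee_addgt0Pr => e e0; rewrite add0e.
  pose k := maxn m (Num.bound e^-1).
  apply: (@le_trans _ _ (mu (~` G k))).
    apply: le_measure; rewrite ?inE.
    - by apply: bigcap_measurableType => j _; exact: measurableC.
    - exact: measurableC.
    - by move=> x /= hx; apply: hx; rewrite /= leq_maxl.
  apply: (le_trans (ltW (muGc k))); rewrite lee_fin.
  have kb : e^-1 < (k.+1)%:R.
    apply: (lt_le_trans (archi_boundP _)); first by rewrite invr_ge0 ltW.
    by rewrite ler_nat; exact: leq_trans (leq_maxr _ _) (leqnSn _).
  rewrite -[leRHS]invrK ler_pV2 ?inE ?invr_gt0 ?ltr0n ?e0 ?unitfE ?invr_eq0 ?gt_eqF ?pnatr_eq0 //; exact: ltW.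
have nb : mu.-negligible Bad.
  apply: negligible_bigcup => m; exists (\bigcap_(k in [set k | (m <= k)%N]) ~` G k).
  split; [by apply: bigcap_measurableType => j _; exact: measurableC | exact: null m | by []].
apply: (negligibleS _ nb) => x; apply: contra_notP => nB.
have gk : forall m, exists k, (m <= k)%N /\ G k x.
  move=> m'; apply: contrapT => hn; apply: nB; exists m' => // k mk Gk.
  by apply: hn; exists k.
apply: esup_big => M m.
pose m' := maxn m (Num.bound `|M|).
have [k [m'k [n /= /andP[kn nN] Akn]]] := gk m'.
exists n; split.
  by apply: leq_trans (leq_maxl _ _) (leq_trans m'k (ltnW kn)).
rewrite lee_fin.
have [a ha [ak _]] := hcv (iter n T x); rewrite (vE _ _ ha) (ak k Akn).
have n0 : (0 < n)%N by apply: leq_trans kn.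
have ln0 : 0 < (l n)%:R :> R by rewrite ltr0n lpos.
have lnN : (l n <= l (N k))%N by apply: ltnW; apply: lmono.
rewrite ler_pdivlMr // /c.
have Mk : M <= (k.+1)%:R.
  apply: (le_trans (ler_norm M)); apply/ltW.
  apply: (lt_le_trans (archi_boundP (normr_ge0 M))); rewrite ler_nat.
  exact: leq_trans (leq_maxr _ _) (leq_trans m'k (leqnSn _)).
apply: (le_trans (ler_wpM2r (ltW ln0) Mk)).
by rewrite ler_wpM2l ?ler0n // ler_nat.
Qed.
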